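(* Let $k\geq 2$ be an integer and $G=BS(1,k)=\langle a,t\mid tat^{-1}=a^k\rangle$. With respect to the generating set $\{a,t\}$, the conjugacy growth rate of $G$ equals the standard growth rate of $G$.
   Context: For $g\in G$, $|g|$ is the word length with respect to $\{a,t\}$; the length of a conjugacy class $[g]$ is $|[g]|=\min\{|h|: h\sim g\}$. Let $s(n)$ be the number of elements of $G$ of length $n$ and $c(n)$ the number of conjugacy classes of length $n$. The standard growth rate is $\limsup_n s(n)^{1/n}$ (equivalently the reciprocal of the radius of convergence of $\sum s(n)z^n$), and the conjugacy growth rate is $\limsup_n c(n)^{1/n}$ (the reciprocal of the radius of convergence of $\sum c(n)z^n$). *)

(* Defs.v *)
From HB Require Import structures.
From mathcomp Require Import all_boot all_order all_algebra.
From mathcomp Require Import all_classical all_reals all_analysis.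
Set Implicit Arguments. Unset Strict Implicit. Unset Printing Implicit Defensive.
Import Order.TTheory GRing.Theory Num.Theory.
Local Open Scope ring_scope.

(* Concrete model of BS(1,k) = < a, t | t a t^-1 = a^k > as the group of
   affine maps x |-> k^n x + b of Q, b in Z[1/k].  The pair (n, b) encodes
   this map; multiplication is composition:  (g1 * g2)(x) = g1 (g2 x).
   a = (0,1) : x |-> x + 1,   t = (1,0) : x |-> k x.
   Group elements are exactly the values of [bs_eval] on words. *)
Definition bs_elt := (int * rat)%type.

Definition bs_mul (k : nat) (g1 g2 : bs_elt) : bs_elt :=
  (g1.1 + g2.1, (k%:R : rat) ^ g1.1 * g2.2 + g1.2).

Definition bs_one : bs_elt := (0, 0).

(* letters of the symmetric generating set {a, a^-1, t, t^-1}: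
   (is_t, is_inverse) *)
Definition letter := (bool * bool)%type.

Definition bs_letter (l : letter) : bs_elt :=
  match l with
  | (false, false) => (0, 1)
  | (false, true)  => (0, -1)
  | (true, false)  => (1, 0)
  | (true, true)   => (-1, 0)
  end.

Definition bs_eval (k : nat) (w : seq letter) : bs_elt :=
  foldr (fun l g => bs_mul k (bs_letter l) g) bs_one w.

Definition words (n : nat) : seq (seq letter) :=
  [seq tval t | t <- enum {: n.-tuple letter}].

Definition reach (k n : nat) (g : bs_elt) : bool :=
  g \in [seq bs_eval k w | w <- words n].

Definition has_len (k : nat) (g : bs_elt) (n : nat) : bool :=
  reach k n g && all (fun m => ~~ reach k m g) (iota 0 n).

Definition sph (k n : nat) : nat :=
  size (undup [seq g <- [seq bs_eval k w | w <- words n] | has_len k g n]).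

(* conjugacy in G (conjugator ranges over group elements = word values):
   h = x g x^-1  <->  x g = h x *)
Definition conj_bs (k : nat) (g h : bs_elt) : Prop :=
  exists w : seq letter, bs_mul k (bs_eval k w) g = bs_mul k h (bs_eval k w).

Definition cyc_min (k n : nat) : seq bs_elt :=
  [seq g <- undup [seq g <- [seq bs_eval k w | w <- words n] | has_len k g n]
   | `[< ~ exists h, exists2 m, (m < n)%N & has_len k h m /\ conj_bs k g h >]].

Fixpoint class_reps (k : nat) (l : seq bs_elt) : seq bs_elt :=
  match l with
  | [::] => [::]
  | g :: l' =>
      if `[< exists2 h, h \in l' & conj_bs k g h >] then class_reps k l'
      else g :: class_reps k l'
  end.

Definition conj_sph (k n : nat) : nat := size (class_reps k (cyc_min k n)).

Definition growth_rate (R : realType) (u : nat -> nat) : \bar R :=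
  limn_esup (fun n => (powR (u n)%:R (n%:R)^-1)%:E).

(* Main.v *)
Require Import Defs.
From HB Require Import structures.
From mathcomp Require Import all_boot all_order all_algebra.
From mathcomp Require Import all_classical all_reals all_analysis.
Set Implicit Arguments. Unset Strict Implicit. Unset Printing Implicit Defensive.
Import Order.TTheory GRing.Theory Num.Theory.
Local Open Scope ring_scope.
From mathcomp Require Import ring lra zify.
Local Notation kR k := (k%:R : rat).

Lemma kR_neq0 k : (0 < k)%N -> kR k != 0.
Proof. by move=> hk; rewrite pnatr_eq0 -lt0n. Qed.

Lemma bs_mulA k : (0 < k)%N -> forall g1 g2 g3,
  bs_mul k (bs_mul k g1 g2) g3 = bs_mul k g1 (bs_mul k g2 g3).
Proof.
move=> hk [n1 b1] [n2 b2] [n3 b3]; rewrite /bs_mul /=.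
by rewrite addrA expfzDr ?kR_neq0 // mulrDr mulrA addrA.
Qed.

Lemma bs_mul1g k g : bs_mul k bs_one g = g.
Proof. by case: g => n b; rewrite /bs_mul /= add0r expr0z mul1r addr0. Qed.

Lemma bs_mulg1 k g : bs_mul k g bs_one = g.
Proof. by case: g => n b; rewrite /bs_mul /= addr0 mulr0 add0r. Qed.

Lemma bs_eval_cons k l w : bs_eval k (l :: w) = bs_mul k (bs_letter l) (bs_eval k w).
Proof. by []. Qed.

Lemma bs_eval_cat k : (0 < k)%N -> forall w1 w2,
  bs_eval k (w1 ++ w2) = bs_mul k (bs_eval k w1) (bs_eval k w2).
Proof.
move=> hk; elim=> [|l w1 IH] w2 /=; first by rewrite bs_mul1g.
by rewrite IH bs_mulA.
Qed.

Definition inv_letter (l : letter) : letter := (l.1, ~~ l.2).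
Definition inv_word (w : seq letter) : seq letter := rev (map inv_letter w).

Lemma inv_wordK : involutive inv_word.
Proof.
move=> w; rewrite /inv_word map_rev revK -map_comp.
rewrite -[RHS]map_id; apply: eq_map => -[a b]; by rewrite /inv_letter /= negbK.
Qed.

Lemma letter_inv k : (0 < k)%N -> forall l,
  bs_mul k (bs_letter l) (bs_letter (inv_letter l)) = bs_one.
Proof.
move=> hk [[] []]; rewrite /bs_mul /bs_one /=; congr pair.
all: try by rewrite ?addrN ?addNr ?mulr0 ?add0r ?expr0z ?mul1r ?addrN ?addNr.

Qed.

Lemma eval_inv_r k : (0 < k)%N -> forall w,
  bs_mul k (bs_eval k w) (bs_eval k (inv_word w)) = bs_one.
Proof.
move=> hk; elim=> [|l w IH] /=; first by rewrite bs_mulg1.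
rewrite /inv_word map_cons rev_cons -cats1 -/(inv_word w) bs_eval_cat //.
rewrite bs_mulA // -(bs_mulA hk (bs_eval k w)) IH bs_mul1g /=.
by rewrite bs_mulg1 letter_inv.
Qed.

Lemma eval_inv_l k : (0 < k)%N -> forall w,
  bs_mul k (bs_eval k (inv_word w)) (bs_eval k w) = bs_one.
Proof.
move=> hk w; rewrite -{2}(inv_wordK w); exact: eval_inv_r.
Qed.

Lemma conj_refl k g : conj_bs k g g.
Proof. by exists [::]; rewrite /= bs_mul1g bs_mulg1. Qed.

Lemma conj_sym k : (0 < k)%N -> forall g h, conj_bs k g h -> conj_bs k h g.
Proof.
move=> hk g h [w Hw]; exists (inv_word w).
set x := bs_eval k w; set y := bs_eval k (inv_word w).
have e1 := eval_inv_r hk w; have e2 := eval_inv_l hk w; rewrite -/x -/y in e1 e2.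
have -> : bs_mul k y h = bs_mul k y (bs_mul k (bs_mul k h x) y).
  by rewrite bs_mulA // e1 bs_mulg1.
rewrite -Hw bs_mulA // -(bs_mulA hk y x) e2 bs_mul1g //.
Qed.

Lemma conj_trans k : (0 < k)%N -> forall g h f,
  conj_bs k g h -> conj_bs k h f -> conj_bs k g f.
Proof.
move=> hk g h f [w1 H1] [w2 H2]; exists (w2 ++ w1).
rewrite bs_eval_cat // bs_mulA // H1 -bs_mulA // H2 bs_mulA //.
Qed.

Lemma conj_fst k g h : conj_bs k g h -> g.1 = h.1.
Proof.
case=> w /(congr1 fst); rewrite /bs_mul /= => H.
by apply: (@addrI _ (bs_eval k w).1); rewrite H addrC.
Qed.

Lemma mem_words n w : (w \in words n) = (size w == n).
Proof.
apply/idP/idP.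
  by case/mapP=> t _ ->; rewrite size_tuple.
move=> /eqP Hs; apply/mapP; exists (Tuple (introT eqP Hs)) => //.
by rewrite mem_enum.
Qed.

Lemma reachP k n g : reflect (exists w, size w = n /\ bs_eval k w = g) (reach k n g).
Proof.
apply: (iffP mapP).
  by case=> w; rewrite mem_words => /eqP Hs ->; exists w.
by case=> w [Hs <-]; exists w; rewrite ?mem_words ?Hs.
Qed.

Lemma eval_fst_le k w : `|(bs_eval k w).1| <= (size w)%:R :> int.
Proof.
elim: w => [|[[] []] w IH] //=; rewrite /bs_mul /= ?add0r //.
- rewrite -addn1 natrD addrC; apply: (le_trans (ler_normD _ _)).
  by rewrite normrN lerD.
- rewrite -addn1 natrD addrC; apply: (le_trans (ler_normD _ _)).
  by rewrite lerD.
- by apply: (le_trans IH); rewrite ler_nat.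
- by apply: (le_trans IH); rewrite ler_nat.
Qed.

Lemma has_len_reach k n g : has_len k g n -> reach k n g.
Proof. by case/andP. Qed.

Lemma has_len_min k n m g : has_len k g n -> reach k m g -> (n <= m)%N.
Proof.
case/andP=> _ /allP Hall Hm; rewrite leqNgt; apply/negP => Hlt.
by have := Hall m; rewrite mem_iota add0n Hlt Hm => /(_ isT).
Qed.

Lemma reach_has_len k n g : reach k n g -> exists2 j, (j <= n)%N & has_len k g j.
Proof.
move=> Hn; have ex : exists j, reach k j g by exists n.
case: (ex_minnP ex) => j Hj Hmin; exists j; first exact: Hmin.
rewrite /has_len Hj /=; apply/allP => m; rewrite mem_iota add0n => /andP[_ Hm].
by apply/negP => /Hmin; rewrite leqNgt Hm.
Qed.

Lemma class_reps_sub k l : {subset class_reps k l <= l}.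
Proof.
elim: l => [|x l IH] //= y; case: asboolP => _.
  by move/IH; rewrite inE orbC => ->.
by rewrite !inE => /orP[->//|/IH ->]; rewrite orbT.
Qed.

Lemma size_class_reps k l : (size (class_reps k l) <= size l)%N.
Proof.
elim: l => [|x l IH] //=; case: asboolP => _ /=; last by [].
exact: leqW.
Qed.

Lemma class_reps_cover k : (0 < k)%N -> forall l g, g \in l ->
  exists2 r, r \in class_reps k l & conj_bs k g r.
Proof.
move=> hk; elim=> [|x l IH] // g; rewrite inE => /orP[/eqP ->|Hg] /=.
  case: asboolP => [[h Hh Hc]|_].
    by case: (IH h Hh) => r Hr Hc'; exists r => //; exact: conj_trans Hc Hc'.
  by exists x; rewrite ?inE ?eqxx //; exact: conj_refl.
case: (IH g Hg) => r Hr Hc; exists r => //.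
by case: asboolP => _ //; rewrite inE Hr orbT.
Qed.

Lemma mem_cyc_min k n h : h \in cyc_min k n ->
  has_len k h n /\
  ~ (exists h', exists2 m, (m < n)%N & has_len k h' m /\ conj_bs k h h').
Proof.
rewrite mem_filter mem_undup mem_filter => /andP[/asboolP H /andP[Hl _]].
by split.
Qed.

Lemma mem_cyc_min_intro k n h : has_len k h n ->
  ~ (exists h', exists2 m, (m < n)%N & has_len k h' m /\ conj_bs k h h') ->
  h \in cyc_min k n.
Proof.
move=> Hl Hn; rewrite mem_filter mem_undup mem_filter Hl.
have := has_len_reach Hl; rewrite /reach => ->; rewrite andbT.
apply/asboolP; rewrite andbT; do 2 apply/asboolP; exact: Hn.
Qed.

Lemma class_exists k : (0 < k)%N -> forall n g, reach k n g ->
  exists j, exists2 r, (j <= n)%N & r \in class_reps k (cyc_min k j) /\ conj_bs k g r.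
Proof.
move=> hk n g Hr.
have ex : exists j, `[< exists h, has_len k h j /\ conj_bs k g h >].
  case: (reach_has_len Hr) => j _ Hj; exists j; apply/asboolP.
  by exists g; split => //; exact: conj_refl.
case: (ex_minnP ex) => j /asboolP [h [Hh Hc]] Hmin.
have Hjn : (j <= n)%N.
  case: (reach_has_len Hr) => j' Hj'n Hj'; apply: leq_trans Hj'n; apply: Hmin.
  by apply/asboolP; exists g; split => //; exact: conj_refl.
have Hin : h \in cyc_min k j.
  apply: mem_cyc_min_intro => // -[h' [m Hm [Hl' Hc']]].
  have : (j <= m)%N.
    by apply: Hmin; apply/asboolP; exists h'; split => //; exact: conj_trans Hc Hc'.
  by rewrite leqNgt Hm.
case: (class_reps_cover hk Hin) => r Hr2 Hc2; exists j, r => //; split => //.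
exact: conj_trans Hc Hc2.
Qed.

Lemma conj_sph_le_sph k n : (conj_sph k n <= sph k n)%N.
Proof.
rewrite /conj_sph /sph; apply: leq_trans (size_class_reps _ _) _.
by rewrite size_filter count_size.
Qed.

Lemma eval_tpow_fst k n : (bs_eval k (nseq n (true, false))).1 = n%:Z.
Proof.
elim: n => [|n IH] //=; rewrite /bs_mul /= IH.
by rewrite -addn1 PoszD addrC.
Qed.

Lemma conj_sph_pos k : (0 < k)%N -> forall n, (0 < conj_sph k n)%N.
Proof.
move=> hk n.
have Hr : reach k n (bs_eval k (nseq n (true, false))).
  by apply/reachP; exists (nseq n (true, false)); rewrite size_nseq.
case: (class_exists hk Hr) => j [r Hjn [Hr' Hc]].
have Hr1 := conj_fst Hc; rewrite eval_tpow_fst in Hr1.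
case: (mem_cyc_min (class_reps_sub Hr')) => /has_len_reach /reachP [w [Hw Hwe]] _.
have := eval_fst_le k w; rewrite Hwe -Hr1 Hw -natz normr_nat ler_nat => Hnj.
have -> : n = j by apply/eqP; rewrite eqn_leq Hnj Hjn.
by move: Hr'; rewrite /conj_sph; case: (class_reps k (cyc_min k j)).
Qed.


Definition vals (k : nat) (c : seq int) : int := foldr (fun ci acc => ci + k%:Z * acc) 0 c.
Definition sabs (c : seq int) : nat := foldr (fun ci acc => (absz ci + acc)%N) 0%N c.

Lemma vals_rcons0 k c : vals k (rcons c 0) = vals k c.
Proof. by elim: c => [|x c IH] /=; rewrite ?IH // mulr0 addr0. Qed.

Lemma sabs_rcons0 c : sabs (rcons c 0) = sabs c.
Proof. by elim: c => [|x c IH] //=; rewrite IH. Qed.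

Lemma vals_set k (c : seq int) p (d : int) : (p < size c)%N ->
  vals k (set_nth 0 c p (c`_p + d)) = vals k c + d * k%:Z ^+ p.
Proof.
elim: c p => [|x c IH] [|p] //= Hp.
  by rewrite expr0 mulr1 addrAC.
by rewrite IH // exprS; ring.
Qed.

Lemma sabs_set (c : seq int) p (d : int) : (p < size c)%N ->
  leq (sabs (set_nth 0 c p (c`_p + d))) (sabs c + absz d)%N.
Proof.
elim: c p => [|x c IH] [|p] //= Hp.
  by rewrite addnAC leq_add2r; lia.
by rewrite -addnA leq_add2l; exact: IH.
Qed.

Lemma size_set (c : seq int) p (y : int) : (p < size c)%N -> size (set_nth 0 c p y) = size c.
Proof. by move=> Hp; rewrite size_set_nth; apply/maxn_idPr. Qed.

Lemma key_lemma k : (0 < k)%N -> forall w, exists p c,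
  [/\ (p < size c)%N, (sabs c + (size c).-1 <= size w)%N &
      (bs_eval k w).2 * kR k ^+ p = (vals k c)%:~R].
Proof.
move=> hk; elim=> [|l w [p [c [Hp Hs He]]]].
  by exists 0%N, [:: 0]; split => //=; rewrite mul0r mulr0 addr0.
have Hadd : forall d : int, (absz d <= 1)%N ->
  exists p c, [/\ (p < size c)%N, (sabs c + (size c).-1 <= (size w).+1)%N &
      ((bs_eval k w).2 + d%:~R) * kR k ^+ p = (vals k c)%:~R].
  move=> d Hd; exists p, (set_nth 0 c p (c`_p + d)); rewrite size_set //; split => //.
    apply: leq_trans (leq_add (sabs_set d Hp) (leqnn _)) _.
    by rewrite addnAC -addn1 leq_add.
  rewrite vals_set // mulrDl He rmorphD /= rmorphM /= rmorphXn /=.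
  by [].
case: l => [[] []]; rewrite /= /bs_mul /=.
- (* t^-1 *)
  have -> : kR k ^ (-1) * (bs_eval k w).2 + 0 = (bs_eval k w).2 / kR k.
    by rewrite exprN1 addr0 mulrC.
  have Hk := kR_neq0 hk.
  have He' : (bs_eval k w).2 / kR k * kR k ^+ p.+1 = (vals k c)%:~R.
    by rewrite exprS mulrA divfK.
  case: (ltnP p.+1 (size c)) => Hp1.
    exists p.+1, c; split => //; exact: leqW.
  exists p.+1, (rcons c 0); rewrite size_rcons vals_rcons0 sabs_rcons0; split => //.
  have -> : size c = p.+1 by apply/eqP; rewrite eqn_leq Hp1 Hp.
  by rewrite /= -addSnnS; move: Hs; rewrite (_ : size c = p.+1) //; apply/eqP; rewrite eqn_leq Hp1 Hp.
- (* t *)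
  rewrite expr1z addr0.
  case: p Hp He => [|p] Hp He.
    exists 0%N, (0 :: c); split => //=.
      by move: Hs Hp; rewrite /= add0n; lia.
    by rewrite add0r expr0 mulr1 rmorphM /= -He expr0 mulr1.
  exists p, c; split => //; first exact: ltnW.
    exact: leqW.
  by rewrite -He exprS mulrA [kR k * _]mulrC.
- (* a^-1 *)
  rewrite expr0z mul1r.
  case: (Hadd (-1) isT) => p' [c' [H1 H2 H3]]; exists p', c'; split => //; by rewrite -H3 /= addrC.
- (* a *)
  rewrite expr0z mul1r.
  case: (Hadd 1 isT) => p' [c' [H1 H2 H3]]; exists p', c'; split => //; by rewrite -H3 /= addrC.
Qed.

Definition apow (z : int) : seq letter := nseq (absz z) (false, (z < 0)%R).
Definition ascw (c : seq int) (tl : nat) : seq letter :=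
  foldr (fun ci w => apow ci ++ (true, false) :: w) (nseq tl (true, false)) c.

Lemma eval_nseq_a k n (b : bool) w : bs_eval k (nseq n (false, b) ++ w) =
  ((bs_eval k w).1, (bs_eval k w).2 + (if b then - n%:R else n%:R)).
Proof.
case: b; elim: n => [|n IH] /=; try by case: (bs_eval k w) => x y; rewrite ?oppr0 addr0.
all: rewrite IH; rewrite /bs_mul /= expr0z mul1r add0r; congr pair;
  rewrite -[n.+1]addn1 natrD; lra.
Qed.

Lemma eval_apow k z w : bs_eval k (apow z ++ w) =
  ((bs_eval k w).1, (bs_eval k w).2 + z%:~R).
Proof.
rewrite /apow eval_nseq_a; congr pair; case: z => n /=; first by [].
by rewrite NegzE rmorphN /=.
Qed.

Lemma eval_tpow k n : bs_eval k (nseq n (true, false)) = (n%:Z, 0).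
Proof.
elim: n => [|n IH] //=; rewrite IH /bs_mul /= mulr0 addr0.
by rewrite -addn1 PoszD addrC.
Qed.

Lemma eval_ascw k c tl : bs_eval k (ascw c tl) = ((size c + tl)%N%:Z, (vals k c)%:~R).
Proof.
elim: c => [|x c IH] /=; first by rewrite eval_tpow.
rewrite eval_apow /= IH /bs_mul /= expr1z addr0; congr pair.
by rewrite rmorphD rmorphM /= addrC.
Qed.

Lemma size_ascw c tl : size (ascw c tl) = (sabs c + size c + tl)%N.
Proof.
elim: c => [|x c IH] /=; first by rewrite size_nseq.
by rewrite size_cat /= IH size_nseq; lia.
Qed.

Lemma vals_bound k (c : seq int) : (0 < k)%N ->
  (absz (vals k c) <= sabs c * k ^ (size c).-1)%N.
Proof.
move=> hk; elim: c => [|x c IH] //=.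
case: c IH => [|y c] IH.
  by rewrite /= mulr0 addr0 expn0 muln1 addn0.
set v := vals k (y :: c); set s := sabs (y :: c).
have H1 : (absz (x + k%:Z * v)%R <= absz x + k * absz v)%N.
  by rewrite (leq_trans (_ : _ <= absz x + absz (k%:Z * v)%R)%N) // ?abszM //; lia.
apply: leq_trans H1 _; rewrite /= mulnDl leq_add //.
  by rewrite leq_pmulr // expn_gt0 hk.
by rewrite /= expnS mulnCA leq_mul2l IH orbT.
Qed.

Definition Zk k (x : rat) := exists e : nat, exists z : int, x * kR k ^+ e = z%:~R.

Lemma Zk_int k (z : int) : Zk k z%:~R.
Proof. by exists 0%N, z; rewrite expr0 mulr1. Qed.

Lemma Zk_add k x y : Zk k x -> Zk k y -> Zk k (x + y).
Proof.
move=> [e1 [z1 H1]] [e2 [z2 H2]]; exists (e1 + e2)%N, (z1 * (k%:Z ^+ e2) + z2 * (k%:Z ^+ e1)).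
rewrite exprD rmorphD /= !rmorphM /= !rmorphXn /= -H1 -H2.
rewrite (_ : ((k%:Z)%:~R : rat) = kR k) //; ring.
Qed.

Lemma Zk_mul k x y : Zk k x -> Zk k y -> Zk k (x * y).
Proof.
move=> [e1 [z1 H1]] [e2 [z2 H2]]; exists (e1 + e2)%N, (z1 * z2).
by rewrite exprD rmorphM /= -H1 -H2; ring.
Qed.

Lemma Zk_opp k x : Zk k x -> Zk k (- x).
Proof. by move=> [e [z H]]; exists e, (- z); rewrite mulNr H rmorphN. Qed.

Lemma Zk_kpowz k (z : int) : (0 < k)%N -> Zk k (kR k ^ z).
Proof.
move=> hk; case: z => n.
  by exists 0%N, (k%:Z ^+ n); rewrite expr0 mulr1 rmorphXn.
exists n.+1, 1; rewrite NegzE -exprnN mulVf //.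
by rewrite expf_neq0 // kR_neq0.
Qed.

Lemma Zk_eval k : (0 < k)%N -> forall w, Zk k (bs_eval k w).2.
Proof.
move=> hk; elim=> [|[[] []] w [e [z IH]]] /=; rewrite /bs_mul /=.
- by apply: Zk_int 0.
- exists e.+1, z; rewrite exprN1 addr0 exprS -IH; field.
  exact: kR_neq0.
- exists e, (k%:Z * z); rewrite expr1z addr0 -mulrA IH rmorphM /=; by [].
- by apply: Zk_add; [rewrite expr0z mul1r; exists e, z|exists 0%N, (-1)%Z; rewrite expr0 mulr1].
- by apply: Zk_add; [rewrite expr0z mul1r; exists e, z|exists 0%N, 1%Z; rewrite expr0 mulr1].
Qed.


Lemma coprime_kM k M e : (1 < k)%N -> (0 < M)%N -> coprime (k ^ M - 1) (k ^ e).
Proof.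
move=> hk hM; case: e => [|e]; first by rewrite expn0 coprimen1.
rewrite coprime_pexpr //.
have H1 : coprime (k ^ M - 1) (k ^ M).
  by rewrite subn1; apply: coprimePn; rewrite expn_gt0; lia.
apply: coprime_dvdr H1; rewrite -{1}(expn1 k); exact: dvdn_exp2l.
Qed.

Lemma Posz_exp (k e : nat) : (k%:Z ^+ e) = (k ^ e)%N%:Z.
Proof. by rewrite -!natz natrX. Qed.

Lemma Zk_div_int k M (z0 : int) D : (1 < k)%N -> (0 < M)%N -> Zk k D ->
  (z0%:~R : rat) = (kR k ^+ M - 1) * D -> (absz z0 < k ^ M - 1)%N -> z0 = 0.
Proof.
move=> hk hM [e [z Hz]] Heq Hlt.
have hkM : (1 <= k ^ M)%N by rewrite expn_gt0 ltnW.
have Hint : z0 * (k%:Z ^+ e) = ((k ^ M - 1)%N%:Z) * z.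
  apply: (@intr_inj rat); rewrite !rmorphM /= rmorphXn /= Heq -Hz.
  rewrite -subzn // rmorphB /= -Posz_exp rmorphXn /=.
  by rewrite mulrA.
have Hn : (absz z0 * k ^ e = (k ^ M - 1) * absz z)%N.
  by move: (congr1 absz Hint); rewrite !abszM Posz_exp !absz_nat.
have Hd : (k ^ M - 1 %| absz z0)%N.
  by rewrite -(Gauss_dvdl _ (coprime_kM e hk hM)) Hn dvdn_mulr.
have [H0|Hpos] := posnP (absz z0).
  by apply/eqP; rewrite -absz_eq0 H0.
by have := dvdn_leq Hpos Hd; rewrite leqNgt Hlt.
Qed.

Lemma Zk_sum k (I : Type) (r : seq I) (P : pred I) (F : I -> rat) :
  (forall i, Zk k (F i)) -> Zk k (\sum_(i <- r | P i) F i).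
Proof.
move=> HF; apply: (big_ind (Zk k)) => //; first exact: (Zk_int k 0).
exact: Zk_add.
Qed.

Lemma geom_pos k M n : (0 < k)%N ->
  exists2 d, Zk k d & 1 - kR k ^+ (n * M) = (kR k ^+ M - 1) * d.
Proof.
move=> hk; set x := kR k ^+ M.
have -> : kR k ^+ (n * M) = x ^+ n by rewrite /x -exprM mulnC.
exists (- \sum_(i < n) x ^+ (n.-1 - i) * 1 ^+ i).
  apply: Zk_opp; apply: Zk_sum => i; rewrite expr1n mulr1 /x -exprM.
  exact: (Zk_kpowz (Posz _) hk).
by rewrite mulrN -subrXX expr1n opprB.
Qed.

Lemma geom k M (s : int) : (0 < k)%N ->
  exists2 d, Zk k d & 1 - kR k ^ (s * M%:Z) = (kR k ^+ M - 1) * d.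
Proof.
move=> hk; case: s => n.
  have [d Hd He] := geom_pos M n hk; exists d => //; by rewrite -He -PoszM.
have [d Hd He] := geom_pos M n.+1 hk.
have Hy : kR k ^+ (n.+1 * M) != 0 by rewrite expf_neq0 // kR_neq0.
exists (- d / kR k ^+ (n.+1 * M)).
  apply: Zk_mul; first exact: Zk_opp.
  rewrite exprnN; exact: Zk_kpowz.
rewrite NegzE mulNr -PoszM -exprnN mulrA mulrN -He; field.
exact: Hy.
Qed.

Lemma fiber k M (R : rat) (B1 B2 q1 q2 : int) (c1 c2 : rat) :
  (1 < k)%N -> (0 < M)%N -> Zk k R -> Zk k c1 -> Zk k c2 ->
  kR k ^ q1 * B1%:~R + c1 = kR k ^ (M%:Z) * c1 + R ->
  kR k ^ q2 * B2%:~R + c2 = kR k ^ (M%:Z) * c2 + R ->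
  (q1 %% M%:Z)%Z = (q2 %% M%:Z)%Z ->
  (absz (B1 - B2) < k ^ M - 1)%N -> B1 = B2.
Proof.
move=> hk hM HR Hc1 Hc2 E1 E2 Hmod Hlt.
have hk0 : (0 < k)%N by apply: ltnW.
have k0 := kR_neq0 hk0.
set s := (divz q1 M%:Z - divz q2 M%:Z).
have Hq : q1 = q2 + s * M%:Z.
  by rewrite /s {1}(divz_eq q1 M) {1}(divz_eq q2 M) Hmod; ring.
set x := kR k ^+ M.
rewrite (_ : kR k ^ (M%:Z) = x) // in E1 E2.
set a1 := kR k ^ q1 in E1; set a2 := kR k ^ q2 in E2.
set y := kR k ^ (s * M%:Z).
have a2y : a1 = a2 * y by rewrite /a1 Hq expfzDr.
have a20 : a2 != 0 by rewrite expfz_neq0.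
have y0 : y != 0 by rewrite expfz_neq0.
have x1 : x - 1 != 0.
  have H2 : (k ^ 1 <= k ^ M)%N by rewrite leq_exp2l.
  rewrite subr_eq0 /x -natrX pnatr_eq1; apply/eqP => H1; rewrite H1 expn1 in H2; lia.
have [d Hd Hgeo] := geom M s hk0.
rewrite -/y -/x in Hgeo.
apply/eqP; rewrite -subr_eq0; apply/eqP.
apply: (@Zk_div_int k M _ (c1 / a1 - c2 / a2 + R * d / a1)) => //.
- apply: Zk_add; first apply: Zk_add.
  + apply: Zk_mul => //; rewrite /a1 invr_expz; exact: Zk_kpowz.
  + apply: Zk_opp; apply: Zk_mul => //; rewrite /a2 invr_expz; exact: Zk_kpowz.
  + apply: Zk_mul; first exact: Zk_mul.
    rewrite /a1 invr_expz; exact: Zk_kpowz.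
- have eB1 : (B1%:~R : rat) = (x * c1 + R - c1) / a1.
    by rewrite -E1 a2y; field; rewrite y0 a20.
  have eB2 : (B2%:~R : rat) = (x * c2 + R - c2) / a2.
    by rewrite -E2; field.
  have ed : d = (1 - y) / (x - 1) by rewrite Hgeo; field; rewrite x1.
  rewrite -/x rmorphB /= eB1 eB2 ed a2y; move: x1 y0 a20; clearbody x y a2 a1 => x1 y0 a20; field.
  by rewrite y0 a20 x1.
Qed.


Definition ell (n : nat) : nat := (trunc_log 2 n).+2.

Lemma ell_ok k n : (1 < k)%N -> (2 * n + 1 <= k ^ ell n)%N.
Proof.
move=> hk; have H := @trunc_log_ltn 2 n isT.
apply: leq_trans (_ : 2 ^ ell n <= k ^ ell n)%N; last by rewrite leq_exp2r.
by rewrite /ell expnS; lia.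
Qed.

Definition keyT := ((nat * nat) * (nat * (nat * nat)))%type.

Definition keyP k n (g : bs_elt) (kk : keyT) : Prop :=
  let: ((j, i), (a, (p, r))) := kk in
  let rho := nth bs_one (class_reps k (cyc_min k j)) i in
  exists (c : seq int) (q : int) (xc : rat),
  [/\ g.2 * kR k ^+ p = (vals k c)%:~R /\ g.1 + n%:Z = a%:Z,
      (2 * absz (vals k c) < k ^ (size c + ell n) - 1)%N,
      rho.1 = (size c + ell n)%N%:Z /\ Zk k rho.2 /\ Zk k xc,
      kR k ^ q * (vals k c)%:~R + xc = kR k ^ ((size c + ell n)%N%:Z) * xc + rho.2
    & r = absz (q %% (size c + ell n)%N%:Z)%Z].

Lemma keyP_inj k n g1 g2 kk : (1 < k)%N -> keyP k n g1 kk -> keyP k n g2 kk -> g1 = g2.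
Proof.
move=> hk; case: kk => [[j i] [a [p r]]] /=.
set rho := nth _ _ _.
move=> [c1 [q1 [x1 [[E1 A1] B1 [F1 [Zr Z1]] C1 R1]]]].
move=> [c2 [q2 [x2 [[E2 A2] B2 [F2 [_ Z2]] C2 R2]]]].
have HM : (size c1 + ell n = size c2 + ell n)%N.
  by apply/eqP; rewrite -eqz_nat -F1 F2.
set M := (size c1 + ell n)%N in E1 A1 B1 F1 C1 R1 HM.
rewrite -HM in B2 C2 R2.
have hM : (0 < M)%N by rewrite /M /ell; lia.
have Hmod : (q1 %% M%:Z)%Z = (q2 %% M%:Z)%Z.
  have G1 : 0 <= (q1 %% M%:Z)%Z by rewrite modz_ge0 // eqz_nat -lt0n.
  have G2 : 0 <= (q2 %% M%:Z)%Z by rewrite modz_ge0 // eqz_nat -lt0n.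
  by rewrite -(gez0_abs G1) -(gez0_abs G2) -R1 -R2.
have Hv : vals k c1 = vals k c2.
  apply: (fiber hk hM Zr Z1 Z2 C1 C2 Hmod).
  have : (absz (vals k c1 - vals k c2)%R <= absz (vals k c1) + absz (vals k c2))%N by lia.
  lia.
have k0 : kR k ^+ p != 0 by rewrite expf_neq0 // kR_neq0 // ltnW.
have e2 : g1.2 = g2.2 by apply: (mulIf k0); rewrite E1 E2 Hv.
have e1 : g1.1 = g2.1 by apply: (@addIr _ n%:Z); rewrite A1 A2.
by rewrite (surjective_pairing g1) (surjective_pairing g2) e1 e2.
Qed.

Definition Ln n := (n + ell n + 1)%N.

Definition JI k n : seq (nat * nat) :=
  [seq (j, i) | j <- iota 0 (Ln n).+1, i <- iota 0 (conj_sph k j)].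

Definition Klist k n : seq keyT :=
  [seq (ji, t) | ji <- JI k n,
     t <- [seq (a, pr) | a <- iota 0 (2 * n + 1),
            pr <- [seq (p, r) | p <- iota 0 n.+1, r <- iota 0 (Ln n).+1]]].

Lemma size_Klist k n : size (Klist k n) =
  (sumn [seq conj_sph k j | j <- iota 0 (Ln n).+1] * ((2 * n + 1) * (n.+1 * (Ln n).+1)))%N.
Proof.
rewrite /Klist !size_allpairs !size_iota /JI size_allpairs_dep.
by congr (sumn _ * _)%N; apply: eq_map => j; rewrite size_iota.
Qed.

Lemma abs_shift (x : int) (n : nat) : `|x| <= n%:Z -> (absz (x + n%:Z)%R < 2 * n + 1)%N /\ 0 <= x + n%:Z.
Proof. move=> H; split; lia. Qed.

Lemma keyP_exists k n g : (1 < k)%N -> has_len k g n ->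
  exists2 kk, kk \in Klist k n & keyP k n g kk.
Proof.
move=> hk Hg; have hk0 : (0 < k)%N by apply: ltnW.
case/reachP: (has_len_reach Hg) => w [Hw Hwe].
have [p [c [Hp Hs He]]] := key_lemma hk0 w.
rewrite Hwe Hw in He Hs.
have Hg1 := eval_fst_le k w; rewrite Hwe Hw natz in Hg1; have [Ha1 Ha2] := abs_shift Hg1.
set M := (size c + ell n)%N.
set gs := bs_eval k (ascw c (ell n)).
have Hgs : gs = (M%:Z, (vals k c)%:~R) by rewrite /gs eval_ascw.
have Hr : reach k (size (ascw c (ell n))) gs by apply/reachP; exists (ascw c (ell n)).
have [j [rho Hj [Hrho [wx Hx]]]] := class_exists hk0 Hr.
have F1 : rho.1 = M%:Z.
  by rewrite -(conj_fst (ex_intro _ wx Hx : conj_bs k gs rho)) Hgs.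
have Zr : Zk k rho.2.
  case: (mem_cyc_min (class_reps_sub Hrho)) => /has_len_reach /reachP [w' [_ <-]] _.
  exact: Zk_eval.
have Zx := Zk_eval hk0 wx.
set q := (bs_eval k wx).1; set xc := (bs_eval k wx).2.
have C1 : kR k ^ q * (vals k c)%:~R + xc = kR k ^ (M%:Z) * xc + rho.2.
  move: (congr1 snd Hx); rewrite Hgs /bs_mul /= F1.
  by rewrite (surjective_pairing (bs_eval k wx)).
have HM : (0 < M)%N by rewrite /M /ell; lia.
have Hq0 : 0 <= (q %% M%:Z)%Z by rewrite modz_ge0 // eqz_nat -lt0n.
have HqM : (q %% M%:Z)%Z < M%:Z by rewrite ltz_pmod // ltz_nat.
have Hsc : (0 < size c)%N by lia.
have Hs' : (sabs c + size c <= n.+1)%N by rewrite -(prednK Hsc) addnS ltnS.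
have Hjl : (j <= Ln n)%N.
  by apply: leq_trans Hj _; rewrite size_ascw /Ln; lia.
exists ((j, index rho (class_reps k (cyc_min k j))),
        (absz (g.1 + n%:Z), (p, absz (q %% M%:Z)%Z))).
  apply: allpairs_f.
    apply/flattenP; exists [seq (j, i0) | i0 <- iota 0 (conj_sph k j)].
      apply: (map_f (fun j => [seq (j, i0) | i0 <- iota 0 (conj_sph k j)])).
      by rewrite mem_iota; lia.
    by apply: map_f; rewrite mem_iota add0n index_mem.
  apply: allpairs_f; first by rewrite mem_iota Ha1.
  apply: allpairs_f.
    rewrite mem_iota add0n /=; apply: (leq_trans Hp); apply: leq_trans _ Hs'; exact: leq_addl.
  rewrite mem_iota add0n; apply/andP; split => //.
  have HaM : (absz (q %% M%:Z)%Z < M)%N by move: Hq0 HqM; set x := (q %% _)%Z; lia.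
  have HML : (M <= Ln n)%N.
    rewrite /M /Ln; apply: leq_trans (_ : (sabs c + size c) + ell n <= _)%N.
      by rewrite leq_add2r leq_addl.
    apply: leq_trans (_ : n.+1 + ell n <= _)%N; first by rewrite leq_add2r.
    by rewrite addnAC addn1.
  by apply: leq_trans HaM _; apply: leq_trans HML _; exact: leqnSn.
rewrite /= nth_index //; exists c, q, xc; split => //.
- by split => //; rewrite gez0_abs.
- have Hb := vals_bound c hk0.
  have Hl := ell_ok n hk.
  have eM : (k ^ M = k * k ^ (size c).-1 * k ^ ell n)%N.
    by rewrite /M -expnS prednK // expnD.
  rewrite eM.
  move: Hb Hl Hs; set A := absz _; set X := (k ^ _)%N; set Y := (k ^ ell n)%N.
  have HX : (0 < X)%N by rewrite expn_gt0 hk0.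
  move=> Hb Hl Hs.
  have H1 : (2 * A <= 2 * n * X)%N.
    apply: leq_trans (_ : 2 * (sabs c * X) <= _)%N; first by rewrite leq_mul2l Hb.
    by rewrite mulnA leq_mul2r leq_mul2l; apply/orP; right; apply/orP; right; lia.
  have H2 : (2 * n * X + X <= X * Y)%N.
    by rewrite -mulSnr mulnC leq_mul2l -addn1 Hl orbT.
  have H3 : (X * Y + X * Y <= k * X * Y)%N.
    by rewrite -mulnA addnn -mul2n leq_mul2r hk orbT.
  lia.
Qed.

Lemma count_main k n : (1 < k)%N -> (sph k n <= size (Klist k n))%N.
Proof.
move=> hk; rewrite /sph.
set S := undup _.
have Hex : forall g, exists kk : keyT, g \in S -> kk \in Klist k n /\ keyP k n g kk.
  move=> g; case: (boolP (g \in S)) => HgS.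
    have Hg : has_len k g n by move: HgS; rewrite mem_undup mem_filter => /andP[].
    by have [kk Hk1 Hk2] := keyP_exists hk Hg; exists kk.
  by exists ((0, 0), (0, (0, 0)))%N.
have [f Hf] := choice Hex.
rewrite -(size_map f); apply: uniq_leq_size.
  rewrite map_inj_in_uniq ?undup_uniq // => g1 g2 H1 H2 Heq.
  have [_ P1] := Hf g1 H1; have [_ P2] := Hf g2 H2.
  rewrite Heq in P1; exact: keyP_inj hk P1 P2.
by move=> _ /mapP [g Hg ->]; have [] := Hf g Hg.
Qed.

Lemma count_final k n : (1 < k)%N ->
  (sph k n <= (2 * n + 1) * n.+1 * (Ln n).+1 *
     \sum_(j < (Ln n).+1) conj_sph k j)%N.
Proof.
move=> hk; apply: leq_trans (count_main n hk) _.
rewrite size_Klist sumnE big_map -(big_mkord xpredT) /index_iota subn0.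
by rewrite mulnC !mulnA.
Qed.


Local Open Scope ereal_scope.

Lemma T_inf (R : realType) (x : (\bar R)^nat) :
  limn_esup x = ereal_inf (range (esups x)).
Proof. by rewrite limn_esup_lim; apply: cvg_lim => //; exact: cvg_esups_inf. Qed.

Lemma T_ub (R : realType) (x : (\bar R)^nat) N l :
  (forall n, (N <= n)%N -> x n <= l) -> limn_esup x <= l.
Proof.
move=> H; rewrite T_inf; apply: ge_ereal_inf; exists (esups x N); first by exists N.
by apply: ge_ereal_sup => _ [m /= Hm <-]; exact: H.
Qed.

Lemma T_lb (R : realType) (x : (\bar R)^nat) l :
  (forall N, exists2 n, (N <= n)%N & l <= x n) -> l <= limn_esup x.
Proof.
move=> H; rewrite T_inf; apply: le_ereal_inf_tmp => _ [N _ <-].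
have [n Hn Hl] := H N; apply: le_trans Hl _.
by apply: ereal_sup_ubound; exists n.
Qed.

Lemma T_ev (R : realType) (x : (\bar R)^nat) l :
  limn_esup x < l -> exists N, forall n, (N <= n)%N -> x n < l.
Proof.
rewrite T_inf => /ereal_inf_lt [_ [N _ <-] Hy]; exists N => n Hn.
apply: le_lt_trans Hy; by apply: ereal_sup_ubound; exists n.
Qed.

Lemma T_mono (R : realType) (x y : (\bar R)^nat) :
  (forall n, x n <= y n) -> limn_esup x <= limn_esup y.
Proof.
move=> H; rewrite !T_inf; apply: le_ereal_inf_tmp => _ [N _ <-].
apply: ge_ereal_inf; exists (esups x N); first by exists N.
apply: ge_ereal_sup => _ [m /= Hm <-]; apply: le_trans (H m) _.
by apply: ereal_sup_ubound; exists m.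
Qed.

Local Close Scope ereal_scope.

Lemma growth_mono (R : realType) (u v : nat -> nat) :
  (forall n, (u n <= v n)%N) -> (growth_rate R u <= growth_rate R v)%E.
Proof.
move=> H; apply: T_mono => n; rewrite lee_fin ge0_ler_powR //.
- by rewrite nnegrE.
- by rewrite nnegrE.
- by rewrite ler_nat.
Qed.

Lemma leXn (R : realType) (x y : R) n : 0 <= x -> x <= y -> x ^+ n <= y ^+ n.
Proof.
move=> x0 xy; apply: lerXn2r; rewrite ?nnegrE //; exact: le_trans xy.
Qed.

Lemma poly_le_exp (R : realType) (C eta : R) (D : nat) : 0 < eta ->
  exists N, forall n, (N <= n)%N -> C * (n.+1%:R) ^+ D <= expR (eta * n%:R).
Proof.
move=> eta0.
have f0 : (0 : R) < (D.+1)`!%:R by rewrite ltr0n fact_gt0.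
set A := `|C| * 2 ^+ D * (D.+1)`!%:R / eta ^+ D.+1.
exists (Num.trunc A).+1 => n Hn.
have HA : A <= n%:R.
  apply: le_trans (ltW (truncnS_gt A)) _; by rewrite ler_nat.
have n1 : (1 <= n)%N by apply: leq_trans Hn.
have npos : (0 : R) < n%:R by rewrite ltr0n.
have e1 : C * (n.+1%:R) ^+ D <= `|C| * (2 ^+ D * n%:R ^+ D).
  apply: le_trans (_ : C * n.+1%:R ^+ D <= `|C| * n.+1%:R ^+ D) _.
    by apply: ler_wpM2r; [rewrite exprn_ge0|exact: ler_norm].
  apply: ler_wpM2l => //.
  rewrite -exprMn; apply: leXn => //; rewrite -natrM ler_nat; lia.
have e2 : `|C| * (2 ^+ D * n%:R ^+ D) = (A * (eta ^+ D.+1 / (D.+1)`!%:R)) * n%:R ^+ D.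
  rewrite /A; field; apply/andP; split; rewrite ?pnatr_eq0 -?lt0n ?fact_gt0 //.
  by rewrite expf_neq0 // gt_eqF.
have e3 : (A * (eta ^+ D.+1 / (D.+1)`!%:R)) * n%:R ^+ D <=
          (n%:R * (eta ^+ D.+1 / (D.+1)`!%:R)) * n%:R ^+ D.
  apply: ler_wpM2r; first by rewrite exprn_ge0 // ltW.
  apply: ler_wpM2r => //; apply: divr_ge0; rewrite ?exprn_ge0 ?ltW //.
have e4 : (n%:R * (eta ^+ D.+1 / (D.+1)`!%:R)) * n%:R ^+ D =
          (eta * n%:R) ^+ D.+1 / (D.+1)`!%:R.
  by rewrite exprMn exprS [n%:R ^+ D.+1]exprS; field; rewrite gt_eqF.
have e5 : (eta * n%:R) ^+ D.+1 / (D.+1)`!%:R <= expR (eta * n%:R).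
  apply: le_trans (expR_ge1Dxn D _); last by rewrite mulr_ge0 // ltW.
  by rewrite lerDr.
by apply: le_trans e1 _; rewrite e2; apply: le_trans e3 _; rewrite e4.
Qed.

Lemma powR_inv_le (R : realType) (x n : nat) (b : R) : (0 < n)%N ->
  powR x%:R (n%:R)^-1 < b -> x%:R <= b ^+ n.
Proof.
move=> n0 H.
have -> : (x%:R : R) = powR (powR x%:R (n%:R)^-1) n%:R.
  by rewrite -powRrM mulVf ?pnatr_eq0 -?lt0n // powRr1.
rewrite powR_mulrn ?powR_ge0 //; apply: leXn; first exact: powR_ge0.
exact: ltW.
Qed.

Lemma powR_le_of (R : realType) (x n : nat) (y : R) : (0 < n)%N -> 0 <= y ->
  x%:R <= y ^+ n -> powR x%:R (n%:R)^-1 <= y.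
Proof.
move=> n0 y0 H.
apply: le_trans (_ : powR (y ^+ n) (n%:R)^-1 <= _).
  apply: ge0_ler_powR; rewrite ?nnegrE ?invr_ge0 //.
  exact: exprn_ge0.
rewrite -powR_mulrn // -powRrM mulfV ?pnatr_eq0 -?lt0n // powRr1 //.
Qed.

Lemma ell_pow n : (2 ^ ell n <= 4 * n.+1)%N.
Proof.
rewrite /ell !expnS mulnA (_ : (2 * 2 = 4)%N) // leq_mul2l /=.
case: n => [|n]; first by [].
by apply: leq_trans (trunc_logP (leqnn 2) (ltn0Sn n)) _.
Qed.

Lemma ell_le n : (ell n <= 4 * n.+1)%N.
Proof. by apply: leq_trans (ltnW (ltn_expl _ (leqnn 2))) (ell_pow n). Qed.

Lemma growth_le (R : realType) (u v : nat -> nat) :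
  (forall n, (0 < v n)%N) ->
  (forall n, (u n <= (2 * n + 1) * n.+1 * (Ln n).+1 * \sum_(j < (Ln n).+1) v j)%N) ->
  (growth_rate R u <= growth_rate R v)%E.
Proof.
move=> vpos Hu.
have g1 : (1%:E <= growth_rate R v)%E.
  apply: T_lb => N; exists N.+1 => //; rewrite lee_fin.
  rewrite -[X in X <= _](powRr0 (v N.+1)%:R); apply: ler_powR.
    by rewrite ler1n.
  by rewrite invr_ge0.
case Eg: (growth_rate R v) g1 => [r| |] g1; last 2 first.
- exact: leey.
- by [].
rewrite lee_fin in g1.
apply/lee_addgt0Pr => eps eps0; rewrite -EFinD.
set b := r + eps / 2.
have b1 : 1 <= b by rewrite /b; lra.
have b0 : 0 < b by lra.
have b0' : 0 <= b by lra.
have [J HJ] : exists J, forall n, (J <= n)%N ->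
    (powR (v n)%:R (n%:R)^-1 < b).
  have : (growth_rate R v < b%:E)%E by rewrite Eg lte_fin /b; lra.
  by move/T_ev => [J HJ]; exists J => n /HJ; rewrite lte_fin.
have Hvj : forall j, (J.+1 <= j)%N -> (v j)%:R <= b ^+ j.
  move=> j Hj; apply: powR_inv_le; first by apply: leq_trans Hj.
  by apply: HJ; apply: ltnW.
set K := (\max_(i < J.+1) v i)%N.
have HvL : forall j L, (j <= L)%N -> (v j)%:R <= (K.+1)%:R * b ^+ L.
  move=> j L HjL; case: (ltnP j J.+1) => Hj.
    have : (v j <= K)%N by rewrite /K (bigD1 (Ordinal Hj)) //= leq_maxl.
    rewrite -(ler_nat R) => HK; apply: le_trans HK _.
    rewrite -[X in X <= _]mulr1; apply: ler_pM => //; last exact: exprn_ege1.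
    by rewrite ler_nat.
  apply: le_trans (Hvj _ Hj) _.
  rewrite -[X in X <= _]mul1r; apply: ler_pM => //.
  - by rewrite exprn_ge0 // ltW.
  - by rewrite ler1n.
  - exact: ler_weXn2l.
have Hsum : forall n, ((\sum_(j < (Ln n).+1) v j)%N%:R : R) <=
    ((Ln n).+1)%:R * ((K.+1)%:R * b ^+ Ln n).
  move=> n; rewrite natr_sum.
  apply: le_trans (_ : \sum_(j < (Ln n).+1) ((K.+1)%:R * b ^+ Ln n) <= _).
    apply: ler_sum => j _; apply: HvL; by rewrite -ltnS.
  by rewrite big_const_ord iter_addr_0 !mulr_natl.
set d := Num.trunc b.
have bd : b <= 2 ^+ d.
  apply: le_trans (ltW (truncnS_gt b)) _.
  rewrite -natrX ler_nat; exact: ltn_expl.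
have Hell : forall n, b ^+ ell n <= (4%:R ^+ d) * (n.+1)%:R ^+ d.
  move=> n; apply: le_trans (_ : (2 ^+ d) ^+ ell n <= _).
    by apply: leXn => //; rewrite ltW.
  rewrite exprAC -exprMn; apply: leXn; first by rewrite -natrX ler0n.
  by rewrite -natrX -natrM ler_nat ell_pow.
set C := (72 * K.+1)%:R * b * 4%:R ^+ d.
set D := (d + 4)%N.
have Hbound : forall n, (u n)%:R <= b ^+ n * (C * (n.+1)%:R ^+ D).
  move=> n.
  have P1 : ((2 * n + 1) * n.+1 * (Ln n).+1 * (Ln n).+1 <= 72 * n.+1 ^ 4)%N.
    have := ell_le n; rewrite /Ln; nia.
  apply: le_trans (_ : ((2 * n + 1) * n.+1 * (Ln n).+1)%N%:R *
       (((Ln n).+1)%:R * ((K.+1)%:R * b ^+ Ln n)) <= _).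
    apply: le_trans (_ : ((2 * n + 1) * n.+1 * (Ln n).+1)%N%:R *
       ((\sum_(j < (Ln n).+1) v j)%N%:R) <= _).
      by rewrite -natrM ler_nat Hu.
    by apply: ler_wpM2l => //; exact: Hsum.
  have -> : ((2 * n + 1) * n.+1 * (Ln n).+1)%N%:R *
       (((Ln n).+1)%:R * ((K.+1)%:R * b ^+ Ln n)) =
      ((2 * n + 1) * n.+1 * (Ln n).+1 * (Ln n).+1)%N%:R *
       ((K.+1)%:R * b ^+ n * b * b ^+ ell n) :> R.
    rewrite /Ln !natrM !exprD expr1; ring.
  apply: le_trans (_ : (72 * n.+1 ^ 4)%N%:R *
       ((K.+1)%:R * b ^+ n * b * ((4%:R ^+ d) * (n.+1)%:R ^+ d)) <= _).
    have Hnn : 0 <= (K.+1)%:R * b ^+ n * b :> R.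
      by apply: mulr_ge0 => //; apply: mulr_ge0; [exact: ler0n|exact: exprn_ge0].
    apply: ler_pM.
    - exact: ler0n.
    - by apply: mulr_ge0 => //; exact: exprn_ge0.
    - by rewrite ler_nat.
    - by apply: ler_wpM2l; last exact: Hell.
  rewrite /C /D exprD !natrM -natrX le_eqVlt; apply/orP; left; apply/eqP.
  ring.
set th := eps / 2 / b.
have th0 : 0 < th by rewrite /th divr_gt0 //; lra.
set eta := ln (1 + th).
have eeta : expR eta = 1 + th by rewrite /eta lnK // posrE; lra.
have eta0 : 0 < eta by rewrite /eta ln_gt0 //; lra.
have bth : b * (1 + th) = r + eps.
  rewrite mulrDr mulr1 /th [b * _]mulrC divfK ?gt_eqF // /b; lra.
have [N HN] := poly_le_exp C D eta0.
apply: (@T_ub _ _ (maxn N 1)) => n Hn; rewrite lee_fin.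
have n0 : (0 < n)%N by apply: leq_trans Hn; rewrite leq_maxr.
apply: powR_le_of => //; first lra.
apply: le_trans (Hbound n) _.
apply: le_trans (_ : b ^+ n * expR (eta * n%:R) <= _).
  apply: ler_wpM2l; first exact: exprn_ge0.
  by apply: HN; apply: leq_trans Hn; rewrite leq_maxl.
by rewrite expRM_natr eeta -exprMn bth.
Qed.


Theorem corollary5p3 (R : realType) (k : nat) (hk : (2 <= k)%N) :
  growth_rate R (conj_sph k) = growth_rate R (sph k).
Proof.
have hk1 : (1 < k)%N by [].
have hk0 : (0 < k)%N by apply: ltnW.
apply/eqP; rewrite eq_le; apply/andP; split.
- apply: growth_mono => n; exact: conj_sph_le_sph.
- apply: growth_le => n.
  + exact: (conj_sph_pos hk0 n).
  + exact: (count_final n hk1).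
Qed.
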